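(* Let $A=(i_1,\dots,i_{a-1},k)$ and $B=(k,j_2,\dots,j_b)$ be ordered tuples of distinct elements of $I_d$ whose underlying sets intersect exactly in $\{k\}$. Let $\alpha\in\mathbb{Z}_2^{a,\mathrm{ev}}$, $\beta\in\mathbb{Z}_2^{b,\mathrm{ev}}$ and $r,s\ge0$. Let $A\cup B=(i_1,\dots,i_{a-1},k,j_2,\dots,j_b)$. Then in $R_l[x_1,\dots,x_d]$, $$h^\alpha_r(A)\,h^\beta_s(B)=(-1)^{\alpha_a((b-1)(l-1)+s)}\,h^\gamma_{r+s}(A\cup B),$$ where $\gamma=(\alpha_1,\dots,\alpha_{a-1},\beta_1,\dots,\beta_{b-1},\beta_b+\alpha_a)\in\mathbb{Z}_2^{a+b-1,\mathrm{ev}}$.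
   Context: $l,d\ge1$, $R$ a commutative ring, $I_a=\{1,\dots,a\}$, $R_l[x_1,\dots,x_d]=R[x_1,\dots,x_d]/(x_1^l,\dots,x_d^l)$. For $\alpha\in\mathbb{Z}_2^a$, $|\alpha|=\sum_j\alpha_j$, $\mathbb{Z}_2^{a,\mathrm{ev}}$ is the set of $\alpha$ with $|\alpha|$ even, and $\epsilon^\alpha_j=\prod_{k<j}(-1)^{\alpha_k}$ (so $\epsilon^\alpha_1=1$). For an ordered tuple $A=(i_1,\dots,i_a)$ of distinct elements of $I_d$, $r\ge0$ and $\alpha\in\mathbb{Z}_2^{a,\mathrm{ev}}$, $h^\alpha_r(A)=\sum_{r_1+\dots+r_a=(a-1)(l-1)+r,\ r_j\ge0}\prod_{j=1}^a(\epsilon^\alpha_jx_{i_j})^{r_j}$. *)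

(* Defs.v *)
From HB Require Import structures.
From mathcomp Require Import all_boot all_order all_algebra.
From mathcomp Require Import mpoly.
Set Implicit Arguments. Unset Strict Implicit. Unset Printing Implicit Defensive.
Import Order.TTheory GRing.Theory.
Local Open Scope ring_scope.

(* Elements of Z_2 are represented by booleans (true = 1); sum in Z_2 is addb.
   Variables x_1,...,x_d are 'X_i for i : 'I_d (0-based indexing). *)

Definition Z2even (al : seq bool) : bool := ~~ odd (count id al).

(* epsilon^alpha_j = prod_{k<j} (-1)^{alpha_k}  (j 0-based: index j <-> paper j+1) *)
Definition eps (R : comNzRingType) (al : seq bool) (j : nat) : R :=
  \prod_(k < j) (-1) ^+ nth false al k.

Definition hpoly (R : comNzRingType) (d l : nat) (al : seq bool) (r : nat)
    (A : seq 'I_d) : {mpoly R[d]} :=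
  let a := size A in
  let N := ((a.-1) * (l.-1) + r)%N in
  \sum_(t : {ffun 'I_a -> 'I_N.+1} | (\sum_(j < a) (t j : nat))%N == N)
     \prod_(j < a) (eps R al j *: 'X_(tnth (in_tuple A) j)) ^+ (t j : nat).

(* Equality in R_l[x_1..x_d] = R[x]/(x_1^l,...,x_d^l): the difference lies in
   the ideal generated by the x_i^l. *)
Definition eq_Rl (R : comNzRingType) (d l : nat) (p q : {mpoly R[d]}) : Prop :=
  exists c : 'I_d -> {mpoly R[d]}, p - q = \sum_(i < d) c i * 'X_i ^+ l.

Arguments hpoly R {d} l al r A.
Arguments eq_Rl {R d} l p q.

(* Main.v *)
Require Import Defs.
From HB Require Import structures.
From mathcomp Require Import all_boot all_order all_algebra.
From mathcomp Require Import mpoly.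
From mathcomp Require Import zify ring.
Import GRing.Theory.
Local Open Scope ring_scope.

Lemma eq_Rl_coef (R : comNzRingType) (d l : nat) (p q : {mpoly R[d]}) :
  (forall m : 'X_{1..d}, (forall i, (m i < l)%N) -> p@_m = q@_m) -> eq_Rl l p q.
Proof.
move=> H.
pose D := p - q.
pose pk (m : 'X_{1..d}) := [pick i | (l <= m i)%N].
exists (fun i => \sum_(m <- msupp D | pk m == Some i) D@_m *: 'X_[(m - U_(i) *+ l)%MM]).
rewrite -/D {1}(mpolyE D).
idtac.
under [RHS]eq_bigr => i _ do rewrite big_distrl /=. rewrite (exchange_big_dep xpredT) //=.
rewrite big_seq_cond [RHS]big_seq_cond; apply: eq_bigr => m /andP[Hm _].
have : pk m != None.
  rewrite /pk; case: pickP => // H0; move: Hm; rewrite mcoeff_msupp.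
  rewrite /D mcoeffB H ?subrr ?eqxx // => i; move: (H0 i) => /=.
  by rewrite ltnNge => ->.
case Epk: (pk m) => [i|] // _.
rewrite (big_pred1 i); last first.
  by move=> j /=; rewrite eq_sym; apply/eqP/eqP => [[]|->].
rewrite -scalerAl mpolyXn -mpolyXD submK //.
apply/mnm_lepP => j; rewrite mulmnE mnm1E.
move: Epk; rewrite /pk; case: pickP => // i0 Hi0 [<-].
by case: eqP => [<-|]; rewrite ?mul1n ?mul0n.
Qed.
Section H.
Variables (R : comNzRingType) (d : nat).

Definition tA (A : seq 'I_d) (j : 'I_(size A)) := tnth (in_tuple A) j.
Arguments tA {A}.

Definition mon (A : seq 'I_d) (t : 'I_(size A) -> nat) : 'X_{1..d} :=
  (\sum_(j < size A) U_(tA j) *+ t j)%MM.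
Arguments mon {A}.

Lemma monE (A : seq 'I_d) (t : 'I_(size A) -> nat) (i : 'I_d) : mon t i = (\sum_(j < size A) (tA j == i) * t j)%N.
Proof.
rewrite /mon mnm_sumE; apply: eq_bigr => j _.
by rewrite mulmnE mnm1E mulnC.
Qed.

Lemma mon_out (A : seq 'I_d) (t : 'I_(size A) -> nat) (i : 'I_d) : i \notin A -> mon t i = 0%N.
Proof.
move=> Hi; rewrite monE big1 // => j _.
case: eqP => // E; case/negP: Hi; rewrite -E /tA; exact: mem_tnth.
Qed.

Lemma mon_in (A : seq 'I_d) (t : 'I_(size A) -> nat) (j : 'I_(size A)) : uniq A -> mon t (tA j) = t j.
Proof.
move=> U; rewrite monE (bigD1 j) //= eqxx mul1n big1 ?addn0 // => j' Hj.
case: eqP => // E; have /tuple_uniqP Ui : uniq (in_tuple A) by [].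
by move: Hj; rewrite (Ui _ _ E) eqxx.
Qed.

Lemma mdeg_mon (A : seq 'I_d) (t : 'I_(size A) -> nat) : mdeg (mon t) = (\sum_(j < size A) t j)%N.
Proof.
rewrite /mon mdeg_sum; apply: eq_bigr => j _.
by rewrite mdegMn mdeg1 mul1n.
Qed.

Lemma sum_supp (A : seq 'I_d) (f : 'I_d -> nat) : uniq A -> (forall i, i \notin A -> f i = 0%N) ->
  (\sum_i f i = \sum_(j < size A) f (tA j))%N.
Proof.
move=> U Hf; rewrite (bigID (mem A)) /= [X in (_ + X)%N]big1 ?addn0; last first.
  by move=> i /Hf.
by rewrite -big_uniq // big_tnth.
Qed.

Lemma term_eq (A : seq 'I_d) (al : seq bool) (t : 'I_(size A) -> nat) :
  \prod_(j < size A) (eps R al j *: 'X_(tnth (in_tuple A) j)) ^+ t j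
  = (\prod_(j < size A) eps R al j ^+ t j) *: ('X_[mon t] : {mpoly R[d]}).
Proof.
under eq_bigr do rewrite exprZn.
by rewrite scaler_prod mprodXnE.
Qed.

Lemma hcoef (l : nat) (al : seq bool) (r : nat) (A : seq 'I_d) (m : 'X_{1..d}) :
  uniq A ->
  (hpoly R l al r A)@_m =
  if (mdeg m == ((size A).-1 * l.-1 + r)%N) && [forall i, (i \notin A) ==> (m i == 0%N)]
  then \prod_(j < size A) eps R al j ^+ m (tA j) else 0.
Proof.
move=> U; rewrite /hpoly raddf_sum /=.
under eq_bigr do rewrite term_eq mcoeffZ mcoeffX.
set N := ((size A).-1 * l.-1 + r)%N.
case: ifP => [/andP[/eqP Hd /forallP Hs]|Hc].
  have Hsupp : forall i, i \notin A -> m i = 0%N.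
    by move=> i Hi; move: (Hs i); rewrite Hi => /eqP.
  have Hle : forall j : 'I_(size A), (m (tA j) < N.+1)%N.
    move=> j; rewrite ltnS -Hd mdegE (bigD1 (tA j)) //=; exact: leq_addr.
  pose t0 : {ffun 'I_(size A) -> 'I_N.+1} := [ffun j => inord (m (tA j))].
  have Ht0 : forall j, (t0 j : nat) = m (tA j).
    by move=> j; rewrite ffunE inordK.
  have Hmon : mon (fun j => (t0 j : nat)) = m.
    apply/mnmP => i; case: (boolP (i \in A)) => Hi.
      have /tnthP [j ->] : i \in in_tuple A by []. by rewrite -/(tA j) mon_in // Ht0.
    by rewrite mon_out // Hsupp.
  have Pt0 : (\sum_(j < size A) (t0 j : nat))%N == N.
    apply/eqP; transitivity (mdeg m); last exact: Hd.
    rewrite mdegE (@sum_supp A _ U Hsupp).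
    by apply: eq_bigr => j _; rewrite Ht0.
  rewrite (bigD1 t0) //= Hmon eqxx mulr1 [X in _ + X]big1 ?addr0.
    by apply: eq_bigr => j _; rewrite Ht0.
  move=> t /andP[_ Ht]; case: eqP; rewrite ?mulr0 // => E.
  case/eqP: Ht; apply/ffunP => j; apply: val_inj.
  by rewrite /= Ht0 -E mon_in.
rewrite big1 // => t Pt; case: eqP; rewrite ?mulr0 // => E.
move: Hc; rewrite -E mdeg_mon (eqP Pt) eqxx /=.
move/negbT/forallPn => [i]; rewrite negb_imply => /andP[Hi].
by rewrite mon_out.
Qed.

End H.

Lemma eps_take (R : comNzRingType) (s : seq bool) (n : nat) :
  eps R s n = (-1) ^+ count id (take n s).
Proof.
elim: n => [|n IH]; first by rewrite /eps big_ord0 take0.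
rewrite /eps big_ord_recr /= -/(eps R s n) IH.
case: (ltnP n (size s)) => H.
  by rewrite (take_nth false H) -cats1 count_cat exprD; case: (nth false s n); rewrite /= ?addn0.
by rewrite !take_oversize ?(leq_trans H) // nth_default // mulr1.
Qed.

Lemma eps_ext (R : comNzRingType) (s s' : seq bool) (n : nat) :
  (forall i, (i < n)%N -> nth false s i = nth false s' i) -> eps R s n = eps R s' n.
Proof. by move=> H; apply: eq_bigr => i _; rewrite H. Qed.

Lemma eps_split (R : comNzRingType) (s : seq bool) (n p : nat) :
  eps R s (n + p) = eps R s n * \prod_(i < p) (-1) ^+ nth false s (n + i).
Proof. by rewrite /eps big_split_ord. Qed.

Lemma eps_last (R : comNzRingType) (s : seq bool) (n : nat) :
  size s = n.+1 -> Z2even s -> eps R s n = (-1) ^+ nth false s n.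
Proof.
move=> Hs He; rewrite eps_take -signr_odd.
move: He; rewrite /Z2even -[s in count _ s](take_size) Hs (take_nth false) ?Hs //.
rewrite -cats1 count_cat /= addn0 oddD.
by case: (odd _); case: (nth false s n).
Qed.

Lemma eps0 (R : comNzRingType) (s : seq bool) : eps R s 0 = 1.
Proof. by rewrite /eps big_ord0. Qed.

Lemma prod_nat (R : comNzRingType) d (A : seq 'I_d) (x0 : 'I_d) (G : nat -> 'I_d -> R) :
  \prod_(j < size A) G j (@tA d A j) = \prod_(0 <= j < size A) G j (nth x0 A j).
Proof. by rewrite big_mkord; apply: eq_bigr => j _; rewrite /tA (tnth_nth x0). Qed.

Lemma deg_split d (f : 'X_{1..d}) (k : 'I_d) (S : seq 'I_d) :
  k \notin S -> (forall i, i \notin S -> i != k -> f i = 0%N) ->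
  mdeg f = (f k + \sum_(i | i \in S) f i)%N.
Proof.
move=> Hk Hf; rewrite mdegE (bigD1 k) //=; congr (_ + _)%N.
rewrite (bigID (mem S)) /= [X in (_ + X)%N]big1 ?addn0.
  by apply: eq_bigl => i; case: eqP => [->|]; rewrite ?(negbTE Hk) ?andbT.
by move=> i /andP[Hi1 Hi2]; apply: Hf.
Qed.

Lemma coefsign (R : comNzRingType) d n (p : {mpoly R[d]}) m :
  ((-1) ^+ n * p)@_m = (-1) ^+ n * p@_m.
Proof.
rewrite -signr_odd -[in RHS]signr_odd; case: (odd n); rewrite ?expr1 ?expr0.
  by rewrite !mulN1r mcoeffN.
by rewrite !mul1r.
Qed.

Theorem mainTheorem13 (R : comNzRingType) (d l : nat) (A' : seq 'I_d) (k : 'I_d)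
    (B' : seq 'I_d) (al be : seq bool) (r s : nat) :
  (1 <= d)%N -> (1 <= l)%N ->
  uniq (rcons A' k) -> uniq (k :: B') ->
  (forall x, x \in rcons A' k -> x \in k :: B' -> x = k) ->
  size al = size (rcons A' k) -> Z2even al ->
  size be = size (k :: B') -> Z2even be ->
  let a := size (rcons A' k) in
  let b := size (k :: B') in
  let ga := take a.-1 al ++ take b.-1 be
            ++ [:: addb (nth false be b.-1) (nth false al a.-1)] in
  eq_Rl l
    (hpoly R l al r (rcons A' k) * hpoly R l be s (k :: B'))
    ((-1) ^+ (nth false al a.-1 * ((b.-1) * (l.-1) + s))%N
       * hpoly R l ga (r + s) (A' ++ k :: B')).
Proof.
move=> Hd Hl UA UB Hint Hal Eal Hbe Ebe a b ga.
rewrite /a /b /ga size_rcons /= in Hal Hbe *.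
set a' := size A'. set b' := size B'.
move: UA; rewrite rcons_uniq => /andP[kA' UA'].
move: UB; rewrite /= => /andP[kB' UB'].
have UA : uniq (rcons A' k) by rewrite rcons_uniq kA' UA'.
have UB : uniq (k :: B') by rewrite /= kB' UB'.
have disj : forall i, i \in A' -> i \in B' -> False.
  move=> i H1 H2; move: (Hint i); rewrite mem_rcons !in_cons H1 H2 !orbT => /(_ isT isT) E.
  by move: H1; rewrite E (negbTE kA').
have UC : uniq (A' ++ k :: B').
  rewrite cat_uniq UA' /= kB' UB' andbT negb_or kA' /=.
  rewrite andbT; apply/hasPn => x Hx; apply/negP => HA; exact: (disj x HA Hx).
rewrite /a size_rcons /=.
apply: eq_Rl_coef => m Hsm.
rewrite coefsign mcoeffM [X in _ = _ * X]hcoef //.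
set NA := (a' * l.-1 + r)%N. set NB := (b' * l.-1 + s)%N.
have sA : (size (rcons A' k)).-1 = a' by rewrite size_rcons.
have sB : (size (k :: B')).-1 = b' by [].
have hNC : ((size (A' ++ k :: B')).-1 * l.-1 + (r + s))%N = (NA + NB)%N.
  rewrite size_cat /= addnS /= /NA /NB -/a' -/b' mulnDl; lia.
have memC : forall i, (i \in A' ++ k :: B') = [|| i \in A', i == k | i \in B'].
  by move=> i; rewrite mem_cat in_cons.
have memA : forall i, (i \in rcons A' k) = (i \in A') || (i == k).
  by move=> i; rewrite mem_rcons in_cons orbC.
rewrite hNC.
case: ifP => [/andP[/eqP HdC /forallP HsC]|HC]; last first.
  rewrite mulr0; apply: big1 => [[m1 m2]] /= /eqP Em.
  rewrite !hcoef // sA sB.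
  case: ifP => [/andP[/eqP H1 /forallP H1s]|]; last by rewrite mul0r.
  case: ifP => [/andP[/eqP H2 /forallP H2s]|]; last by rewrite mulr0.
  exfalso; move: HC; rewrite Em mdegD H1 H2 eqxx /=.
  suff -> : [forall i, (i \notin A' ++ k :: B') ==> ((m1 + m2)%MM i == 0%N)] by [].
  apply/forallP => i; apply/implyP => Hi; rewrite mnmDE.
  move: (H1s i) (H2s i); rewrite memA in_cons; move: Hi; rewrite memC.
  by case: (i \in A'); case: (i == k); case: (i \in B') => //= _ /eqP -> /eqP ->.
have HsC' : forall i, i \notin A' -> i != k -> i \notin B' -> m i = 0%N.
  move=> i H1 H2 H3; move: (HsC i); rewrite memC (negbTE H1) (negbTE H2) (negbTE H3) /=.
  by move/eqP.
have notB : forall i, i \in A' -> i \notin k :: B'.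
  move=> i Hi; rewrite in_cons negb_or; apply/andP; split.
    by apply/eqP => E; move: Hi; rewrite E (negbTE kA').
  by apply/negP => /(disj _ Hi).
have notA : forall i, i \in B' -> i \notin rcons A' k.
  move=> i Hi; rewrite memA negb_or; apply/andP; split.
    by apply/negP => /disj /(_ Hi).
  by apply/eqP => E; move: Hi; rewrite E (negbTE kB').
set SA := (\sum_(i | i \in A') m i)%N.
set SB := (\sum_(i | i \in B') m i)%N.
have cardA : forall (S : seq 'I_d), uniq S -> (\sum_(i | i \in S) m i <= size S * l.-1)%N.
  move=> S US; apply: (@leq_trans (\sum_(i in S) l.-1)%N).
    by apply: leq_sum => i _; rewrite -ltnS prednK.
  by rewrite sum_nat_const (card_uniqP US).
have SAle : (SA <= NA)%N by apply: (leq_trans (cardA _ UA')); rewrite /NA leq_addr.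
have SBle : (SB <= NB)%N by apply: (leq_trans (cardA _ UB')); rewrite /NB leq_addr.
have Fdeg : mdeg m = (m k + SA + SB)%N.
  rewrite (@deg_split _ m k (A' ++ B')); last first.
    - move=> i; rewrite mem_cat negb_or => /andP[H1 H3] H2; exact: HsC'.
    - by rewrite mem_cat negb_or kA' kB'.
  rewrite -addnA; congr (_ + _)%N; rewrite (bigID (mem A')) /=; congr (_ + _)%N.
    by apply: eq_bigl => i; rewrite mem_cat; case: (i \in A'); rewrite /= ?andbF.
  rewrite /SB; apply: eq_bigl => i; rewrite mem_cat; case: (boolP (i \in A')) => Hi.
    by rewrite andbF; apply/esym/negP => /(disj _ Hi).
  by rewrite andbT.
pose mA : 'X_{1..d} := [multinom (if i \in A' then m i else if i == k then (NA - SA)%N else 0%N) | i < d].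
pose mB : 'X_{1..d} := [multinom (if i \in B' then m i else if i == k then (NB - SB)%N else 0%N) | i < d].
have Em : m = (mA + mB)%MM.
  apply/mnmP => i; rewrite mnmDE !mnmE.
  case: (boolP (i \in A')) => Hi.
    by move: (notB i Hi); rewrite in_cons negb_or => /andP[/negbTE -> /negbTE ->]; rewrite addn0.
  case: (boolP (i \in B')) => Hi'.
    by move: (notA i Hi'); rewrite memA negb_or => /andP[_ /negbTE ->].
  case: eqP => [->|/eqP Hik]; last by rewrite HsC'.
  by have F := Fdeg; rewrite HdC in F; clear -F SAle SBle; lia.
have mAk : mA k = (NA - SA)%N by rewrite mnmE (negbTE kA') eqxx.
have mBk : mB k = (NB - SB)%N by rewrite mnmE (negbTE kB') eqxx.
have CA : (mdeg mA == (size (rcons A' k)).-1 * l.-1 + r)%N &&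
          [forall i, (i \notin rcons A' k) ==> (mA i == 0%N)].
  rewrite sA; apply/andP; split.
    rewrite (@deg_split _ mA k A') //; last first.
      by move=> i H1 H2; rewrite mnmE (negbTE H1) (negbTE H2).
    rewrite mAk; apply/eqP; rewrite (eq_bigr m); last by move=> i Hi; rewrite mnmE Hi.
    by rewrite -/SA subnK.
  apply/forallP => i; apply/implyP; rewrite memA negb_or => /andP[H1 H2].
  by rewrite mnmE (negbTE H1) (negbTE H2).
have CB : (mdeg mB == (size (k :: B')).-1 * l.-1 + s)%N &&
          [forall i, (i \notin k :: B') ==> (mB i == 0%N)].
  rewrite sB; apply/andP; split.
    rewrite (@deg_split _ mB k B') //; last first.
      by move=> i H1 H2; rewrite mnmE (negbTE H1) (negbTE H2).
    rewrite mBk; apply/eqP; rewrite (eq_bigr m); last by move=> i Hi; rewrite mnmE Hi.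
    by rewrite -/SB subnK.
  apply/forallP => i; apply/implyP; rewrite in_cons negb_or => /andP[H2 H1].
  by rewrite mnmE (negbTE H1) (negbTE H2).
have uniqA : forall m1 m2 : 'X_{1..d}, m = (m1 + m2)%MM ->
    (mdeg m1 == (size (rcons A' k)).-1 * l.-1 + r)%N &&
          [forall i, (i \notin rcons A' k) ==> (m1 i == 0%N)] ->
    (mdeg m2 == (size (k :: B')).-1 * l.-1 + s)%N &&
          [forall i, (i \notin k :: B') ==> (m2 i == 0%N)] -> m1 = mA /\ m2 = mB.
  move=> m1 m2 E12; rewrite sA sB => /andP[/eqP D1 /forallP S1] /andP[/eqP D2 /forallP S2].
  have S1' : forall i, i \notin rcons A' k -> m1 i = 0%N by move=> i Hi; move: (S1 i); rewrite Hi => /eqP.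
  have S2' : forall i, i \notin k :: B' -> m2 i = 0%N by move=> i Hi; move: (S2 i); rewrite Hi => /eqP.
  have e1 : forall i, i \in A' -> m1 i = m i.
    by move=> i Hi; rewrite E12 mnmDE (S2' i (notB i Hi)) addn0.
  have e2 : forall i, i \in B' -> m2 i = m i.
    by move=> i Hi; rewrite E12 mnmDE (S1' i (notA i Hi)).
  have d1 : mdeg m1 = (m1 k + SA)%N.
    rewrite (@deg_split _ m1 k A') //; last first.
      by move=> i H1 H2; apply: S1'; rewrite memA negb_or H1 H2.
    by congr (_ + _)%N; apply: eq_bigr => i Hi; rewrite e1.
  have d2 : mdeg m2 = (m2 k + SB)%N.
    rewrite (@deg_split _ m2 k B') //; last first.
      by move=> i H1 H2; apply: S2'; rewrite in_cons negb_or H1 andbT; apply/eqP => E; move: H2; rewrite E eqxx.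
    by congr (_ + _)%N; apply: eq_bigr => i Hi; rewrite e2.
  split; apply/mnmP => i; rewrite mnmE.
    case: (boolP (i \in A')) => Hi; first exact: e1.
    case: eqP => [->|/eqP Hik]; first by rewrite /NA -D1 d1 addnK.
    by apply: S1'; rewrite memA negb_or Hi Hik.
  case: (boolP (i \in B')) => Hi; first exact: e2.
  case: eqP => [->|/eqP Hik]; first by rewrite /NB -D2 d2 addnK.
  by apply: S2'; rewrite in_cons negb_or Hi Hik.
have bA : (mdeg mA < (mdeg m).+1)%N by rewrite ltnS [in X in (_ <= X)%N]Em mdegD leq_addr.
have bB : (mdeg mB < (mdeg m).+1)%N by rewrite ltnS [in X in (_ <= X)%N]Em mdegD leq_addl.
rewrite (bigD1 (BMultinom bA, BMultinom bB)) /=; last by rewrite -Em.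
rewrite [X in _ + X]big1 ?addr0; last first.
  move=> [k1 k2] /= /andP[/eqP E12 Hne]; rewrite !hcoef //.
  case: ifP => C1; last by rewrite mul0r.
  case: ifP => C2; last by rewrite mulr0.
  case: (uniqA _ _ E12 C1 C2) => E1 E2; exfalso; move: Hne.
  by rewrite xpair_eqE -!val_eqE /= E1 E2 !eqxx.
rewrite hcoef // (ifT _ _ CA) hcoef // (ifT _ _ CB).
rewrite (@prod_nat R d (rcons A' k) k (fun j i => eps R al j ^+ mA i)).
rewrite (@prod_nat R d (k :: B') k (fun j i => eps R be j ^+ mB i)).
set G := (take (size A') al ++ _).
rewrite (@prod_nat R d (A' ++ k :: B') k (fun j i => eps R G j ^+ m i)).
have sG : size (take (size A') al) = a' by rewrite size_take Hal ltnSn.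
have gaA : forall j, (j <= a')%N -> eps R G j = eps R al j.
  move=> j Hj; apply: eps_ext => i Hi.
  by rewrite /G nth_cat sG (leq_trans Hi Hj) nth_take // (leq_trans Hi Hj).
have gaB : forall j, (j < b')%N -> eps R G (j.+1 + a') = eps R al a' * eps R be j.+1.
  move=> j Hj; rewrite addnC eps_split gaA //; congr (_ * _); apply: eq_bigr => i _.
  rewrite /G nth_cat sG ltnNge leq_addr /= addKn nth_cat size_take Hbe ltnSn.
  by rewrite (leq_trans (ltn_ord i) Hj) nth_take // (leq_trans (ltn_ord i) Hj).
rewrite size_rcons big_nat_recr //= nth_rcons ltnn eqxx mAk.
rewrite big_nat_recl //= eps0 expr1n mul1r.
have splitC : forall F : nat -> R, \prod_(0 <= j < a' + b'.+1) F j =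
    \prod_(0 <= j < a') F j * (F a' * \prod_(0 <= j < b') F (j.+1 + a')%N).
  move=> F; rewrite (big_cat_nat _ (n := a')) ?leq_addr //; congr (_ * _).
  by rewrite -{1}[a']add0n big_addn addKn big_nat_recl.
rewrite size_cat /= splitC nth_cat ltnn subnn /= gaA //.
under eq_big_nat => i /andP[_ Hi] do rewrite nth_rcons Hi mnmE (mem_nth k Hi).
under [X in _ * X = _]eq_big_nat => i /andP[_ Hi] do rewrite mnmE (mem_nth k Hi).
under [X in _ = _ * (X * _)]eq_big_nat => i /andP[_ Hi] do rewrite gaA ?(ltnW Hi) // nth_cat Hi.
under [X in _ = _ * (_ * (_ * X))]eq_big_nat => i /andP[_ Hi] do
  rewrite gaB // nth_cat ltnNge leq_addl /= addnK /= exprMn.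
rewrite big_split /= prodrXr.
have SBE : (\sum_(0 <= i < b') m (nth k B' i))%N = SB.
  by rewrite /SB -big_uniq // (big_nth k).
rewrite SBE (@eps_last R al a' Hal Eal).
have Eexp : (NB + m k + SB = (NA - SA) + NB * 2)%N.
  by have F := Fdeg; rewrite HdC in F; clear -F SAle SBle; lia.
set t := (-1) ^+ nth false al (size A') : R.
set P1 := \prod_(0 <= i < size A') _. set P2 := \prod_(0 <= i < size B') _.
have -> : (-1) ^+ (nth false al a' * NB) = t ^+ NB :> R by rewrite exprM.
have t2 : t ^+ (NB * 2) = 1 by rewrite exprM -exprM mulnC exprM sqrr_sign expr1n.
rewrite -[t ^+ (NA - SA)]mulr1 -t2 -exprD -Eexp !exprD. ring.
Qed.
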